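(* Let $K$ be a subcomplex of a simplicial complex $L$, and assume $K$ is balanced, with a fixed proper $(\dim K+1)$-coloring. Then there exists a complex $L'$ obtained from $L$ by a finite sequence of stellar subdivisions such that (i) $K$ is a subcomplex of $L'$, (ii) $L'$ is balanced, and (iii) there is a proper $(\dim L'+1)$-coloring of $L'$ extending the given coloring of $K$.
   Context: All simplicial complexes are finite abstract simplicial complexes. The stellar subdivision of $\Delta$ at a nonempty face $F$ is $\mathrm{sd}_F(\Delta)=\{G\in\Delta: F\not\subseteq G\}\cup(\overline{\{a\}}*\partial\overline{F}*\mathrm{lk}_\Delta(F))$, where $a$ is a new vertex, $\overline{F}$ is the simplex of all subsets of $F$, $\partial\overline{F}$ the complex of its proper subsets, $*$ the join, and $\mathrm{lk}_\Delta(F)=\{G\in\Delta: F\cap G=\emptyset, F\cup G\in\Delta\}$. A proper $m$-coloring maps vertices to $\{0,\dots,m-1\}$ with distinct colors on the endpoints of each edge; a $d$-dimensional complex is balanced if it has a proper $(d+1)$-coloring. *)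

(* Defs.v *)
From mathcomp Require Import all_boot.
Set Implicit Arguments. Unset Strict Implicit. Unset Printing Implicit Defensive.

(* Vertices are natural numbers (an infinite supply, needed for the new
   vertices of stellar subdivisions).  A face is a finite set of vertices,
   represented canonically by a strictly increasing list.  A (finite abstract
   simplicial) complex is a finite list of faces closed under taking subfaces;
   repetitions in the list are irrelevant: complexes are compared via
   membership. *)
Definition face := seq nat.
Definition complex := seq face.

Definition face_ok (F : face) : Prop := sorted ltn F.

Definition is_complex (D : complex) : Prop :=
  (forall G, G \in D -> face_ok G) /\
  (forall G H, G \in D -> face_ok H -> {subset H <= G} -> H \in D).

Definition has_face (D : complex) (s : seq nat) : Prop :=
  exists2 H, H \in D & H =i s.

Definition is_vertex (D : complex) (v : nat) : Prop :=
  exists2 G, G \in D & v \in G.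

Definition subcomplex (K L : complex) : Prop := {subset K <= L}.

Definition in_link (D : complex) (F C : face) : Prop :=
  C \in D /\ (forall x, x \in F -> x \notin C) /\ has_face D (F ++ C).

(* D' is (a copy of) the stellar subdivision of D at the nonempty face F,
   with new vertex a:  {G in D : F not subset G} \cup ({a}-bar * dF-bar * lk F). *)
Definition stellar (D : complex) (F : face) (a : nat) (D' : complex) : Prop :=
  F \in D /\ F <> [::] /\ ~ is_vertex D a /\ is_complex D' /\
  forall G, face_ok G ->
    (G \in D' <->
      ((G \in D /\ ~ {subset F <= G}) \/
       exists A B C : face,
         {subset A <= [:: a]} /\
         ({subset B <= F} /\ ~ {subset F <= B}) /\
         in_link D F C /\
         G =i A ++ B ++ C)).

Inductive stellar_seq : complex -> complex -> Prop :=
  | ss_refl D : stellar_seq D D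
  | ss_step D F a D1 D2 : stellar D F a D1 -> stellar_seq D1 D2 -> stellar_seq D D2.

(* dim D + 1 = maximal number of vertices of a face (0 for the empty complex
   and for {emptyset}, matching dim = -1). *)
Definition dim1 (D : complex) : nat := \max_(G <- D) size G.

Definition proper_coloring (D : complex) (m : nat) (c : nat -> nat) : Prop :=
  (forall v, is_vertex D v -> c v < m) /\
  (forall G, G \in D -> size G = 2 ->
     forall u v, u \in G -> v \in G -> u != v -> c u != c v).

Definition balanced (D : complex) : Prop :=
  exists c, proper_coloring D (dim1 D) c.

(* Main.v *)
Require Import Defs.
From mathcomp Require Import all_boot zify.
Set Implicit Arguments. Unset Strict Implicit. Unset Printing Implicit Defensive.

Definition subl (s t : seq nat) := all (fun x => x \in t) s.
Lemma sublP s t : reflect {subset s <= t} (subl s t).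
Proof. exact: allP. Qed.

Lemma ok_uniq G : face_ok G -> uniq G.
Proof. exact: (sorted_uniq ltn_trans ltnn). Qed.

Definition mkf (s : seq nat) := sort leq (undup s).
Lemma mkf_ok s : face_ok (mkf s).
Proof.
rewrite /face_ok ltn_sorted_uniq_leq sort_uniq undup_uniq /=.
apply: sort_sorted; exact: leq_total.
Qed.
Lemma mem_mkf s x : (x \in mkf s) = (x \in s).
Proof. by rewrite mem_sort mem_undup. Qed.
Lemma size_mkf s : uniq s -> size (mkf s) = size s.
Proof. by move=> u; rewrite size_sort undup_id. Qed.

Lemma face_eq G H : face_ok G -> face_ok H -> G =i H -> G = H.
Proof. exact: (irr_sorted_eq ltn_trans ltnn). Qed.

Lemma cl D G H : is_complex D -> G \in D -> face_ok H -> {subset H <= G} -> H \in D.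
Proof. by case=> _ h; apply: h. Qed.

Lemma cl_mkf D G s : is_complex D -> G \in D -> {subset s <= G} -> mkf s \in D.
Proof.
move=> cD GD sG; apply: (cl cD GD (mkf_ok s)) => x; rewrite mem_mkf; exact: sG.
Qed.

Lemma cl_ok D G : is_complex D -> G \in D -> face_ok G.
Proof. by case=> h _; apply: h. Qed.

Lemma cl_filter D G (p : pred nat) : is_complex D -> G \in D -> [seq x <- G | p x] \in D.
Proof.
move=> cD GD; apply: (cl cD GD).
  rewrite /face_ok; apply: sorted_filter; [exact: ltn_trans| exact: cl_ok GD].
by move=> x; rewrite mem_filter => /andP[].
Qed.

Definition Bs (D : complex) F := [seq B <- D | subl B F && ~~ subl F B].
Definition Cs (D : complex) F := [seq C <- D | all (fun x => x \notin F) C &&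
                                         has (fun H => subl F H && subl C H) D].
Definition stel (D : complex) F a : complex :=
  [seq G <- D | ~~ subl F G] ++ [seq mkf (a :: B ++ C) | B <- Bs D F, C <- Cs D F].

Section Stel.
Variables (D : complex) (F : face) (a : nat).
Hypotheses (cD : is_complex D) (FD : F \in D) (Fn : F <> [::]) (fa : ~ is_vertex D a).

Lemma notv G x : G \in D -> x \in G -> x <> a.
Proof. move=> GD xG ex; apply: fa; exists G => //; by rewrite -ex. Qed.

Lemma stel_fwd G : G \in stel D F a ->
  ((G \in D /\ ~ {subset F <= G}) \/
       exists A B C : face,
         {subset A <= [:: a]} /\
         ({subset B <= F} /\ ~ {subset F <= B}) /\
         in_link D F C /\
         G =i A ++ B ++ C).
Proof.
rewrite mem_cat => /orP[|].
  rewrite mem_filter => /andP[/sublP h GD]; by left.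
case/allpairsP => [[B C]] /= [].
rewrite mem_filter => /andP[/andP[/sublP BF /sublP FB] BD].
rewrite mem_filter => /andP[/andP[/allP dC /hasP[H HD /andP[/sublP FH /sublP CH]]] CD] ->.
right; exists [:: a], B, C; split => //; split.
  split => //; by apply/negP.
split.
  split => //; split.
    by move=> x xF; apply/negP => xC; move: (dC x xC); rewrite xF.
  exists [seq x <- H | x \in F ++ C]; first exact: cl_filter.
  by move=> x; rewrite mem_filter mem_cat andb_idr // => /orP[/FH|/CH].
by move=> x; rewrite mem_mkf.
Qed.

Lemma stel_bwd G : face_ok G ->
  ((G \in D /\ ~ {subset F <= G}) \/
       exists A B C : face,
         {subset A <= [:: a]} /\
         ({subset B <= F} /\ ~ {subset F <= B}) /\
         in_link D F C /\
         G =i A ++ B ++ C) -> G \in stel D F a.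
Proof.
move=> okG [[GD nFG]|[A [B [C [AA [[BF nFB] [[CD [dC [H HD HFC]]] GE]]]]]]].
  by rewrite mem_cat mem_filter GD andbT; apply/orP; left; apply/negP => /sublP.
have CH : {subset C <= H} by move=> x xC; rewrite HFC mem_cat xC orbT.
have FH : {subset F <= H} by move=> x xF; rewrite HFC mem_cat xF.
case aG: (a \in G).
  rewrite mem_cat; apply/orP; right.
  apply/allpairsP; exists ([seq x <- F | x \in B], C) => /=; split.
  - rewrite mem_filter cl_filter // andbT; apply/andP; split.
      by apply/sublP => x; rewrite mem_filter => /andP[].
    apply/negP => /sublP h; apply: nFB => x /h; by rewrite mem_filter => /andP[].
  - rewrite mem_filter CD andbT; apply/andP; split.
      by apply/allP => x xC; apply/negP => xF; move: (dC x xF); rewrite xC.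
    by apply/hasP; exists H => //; apply/andP; split; apply/sublP.
  apply: face_eq => //; first exact: mkf_ok.
  move=> x; rewrite mem_mkf in_cons mem_cat mem_filter GE !mem_cat.
  apply/idP/idP.
    case/or3P => [/AA|xB|->]; last by rewrite !orbT.
      by rewrite inE => ->.
    by rewrite xB (BF _ xB) orbT.
  case/or3P => [/eqP->|/andP[-> _]|->]; rewrite ?orbT //.
  by move: aG; rewrite GE !mem_cat => /or3P[->//|/BF /(notv FD)/(_ erefl) //| /(notv CD)/(_ erefl) //].
rewrite mem_cat; apply/orP; left; rewrite mem_filter; apply/andP; split.
  apply/negP => /sublP FG; apply: nFB => x xF.
  move: (FG x xF); rewrite GE !mem_cat => /or3P[/AA|//|xC].
    by rewrite inE => /eqP ex; move: (notv FD xF); rewrite ex.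
  by move: (dC x xF); rewrite xC.
apply: (cl cD HD okG) => x; rewrite GE !mem_cat => /or3P[xA|/BF/FH //|/CH //].
by move: aG; rewrite GE !mem_cat; move: (AA x xA); rewrite inE => /eqP <-; rewrite xA.
Qed.

Lemma stel_complex : is_complex (stel D F a).
Proof.
split.
  move=> G; rewrite mem_cat => /orP[|].
    rewrite mem_filter => /andP[_ GD]; exact: cl_ok GD.
  by case/allpairsP => [[B C]] [_ _ ->]; exact: mkf_ok.
move=> G H GS okH HG; apply: stel_bwd => //.
have okG : face_ok G.
  move: GS; rewrite mem_cat => /orP[|].
    rewrite mem_filter => /andP[_ GD]; exact: cl_ok GD.
  by case/allpairsP => [[B C]] [_ _ ->]; exact: mkf_ok.
case: (stel_fwd GS) => [[GD nFG]|[A [B [C [AA [[BF nFB] [[CD [dC [H0 H0D HFC]]] GE]]]]]]].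
  left; split; first exact: (cl cD GD okH HG).
  by move=> FH; apply: nFG => x /FH /HG.
right; exists [seq x <- A | x \in H], [seq x <- B | x \in H], [seq x <- C | x \in H].
split; first by move=> x; rewrite mem_filter => /andP[_ /AA].
split; first split.
- by move=> x; rewrite mem_filter => /andP[_ /BF].
- by move=> h; apply: nFB => x /h; rewrite mem_filter => /andP[].
split; first split.
  exact: cl_filter.
split; first by move=> x /dC; rewrite mem_filter negb_and => ->; rewrite orbT.
exists [seq x <- H0 | x \in F ++ [seq x <- C | x \in H]]; first exact: cl_filter.
move=> x; rewrite mem_filter; apply/andP/idP; first by case.
move=> h; split => //; rewrite HFC; move: h; rewrite !mem_cat mem_filter.
by case/orP => [->|/andP[_ ->]]; rewrite ?orbT.
move=> x; rewrite !mem_cat !mem_filter; apply/idP/idP.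
  by move=> xH; move: (HG x xH); rewrite GE !mem_cat xH.
by case/or3P => /andP[].
Qed.

Lemma stel_ok : stellar D F a (stel D F a).
Proof.
split => //; split => //; split => //; split; first exact: stel_complex.
move=> G okG; split; first exact: stel_fwd.
exact: stel_bwd.
Qed.

End Stel.

Definition vx (D : complex) v := has (fun G => v \in G) D.
Lemma vxP D v : reflect (is_vertex D v) (vx D v).
Proof. exact: hasP. Qed.
Definition adj (D : complex) u v := has (fun G => (u \in G) && (v \in G)) D.

Definition fresh (D : complex) := (\max_(G <- D) \max_(v <- G) v).+1.
Lemma fresh_ok D : ~ is_vertex D (fresh D).
Proof.
case=> G GD vG; move: (@leq_bigmax_seq _ _ xpredT (fun G : seq nat => \max_(v <- G) v) _ GD isT).
move: (@leq_bigmax_seq _ _ xpredT id _ vG isT) => h1 h2.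
by move: (leq_trans h1 h2); rewrite /fresh ltnn.
Qed.

Lemma ss_trans A B C : stellar_seq A B -> stellar_seq B C -> stellar_seq A C.
Proof.
elim=> [//|D F a D1 D2 s _ IH] h; apply: ss_step s _; exact: IH.
Qed.

Lemma dim_ge (D : complex) G : G \in D -> size G <= dim1 D.
Proof. move=> GD; exact: (@leq_bigmax_seq _ _ xpredT size _ GD isT). Qed.

Section StlFacts.
Variables (D : complex) (F : face) (a : nat) (D' : complex).
Hypotheses (cD : is_complex D) (st : stellar D F a D').

Let FD : F \in D. Proof. by case: st. Qed.
Let Fn : F <> [::]. Proof. by case: st => _ []. Qed.
Let fa : ~ is_vertex D a. Proof. by case: st => _ [_ []]. Qed.
Lemma stl_complex : is_complex D'. Proof. by case: st => _ [_ [_ []]]. Qed.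
Let iff G : face_ok G -> (G \in D' <->
      ((G \in D /\ ~ {subset F <= G}) \/
       exists A B C : face,
         {subset A <= [:: a]} /\
         ({subset B <= F} /\ ~ {subset F <= B}) /\
         in_link D F C /\
         G =i A ++ B ++ C)).
Proof. by case: st => _ [_ [_ [_]]]; apply. Qed.

Let notv G x : G \in D -> x \in G -> x <> a.
Proof. move=> GD xG ex; apply: fa; exists G => //; by rewrite -ex. Qed.

Lemma stl_old G : G \in D' -> a \notin G -> G \in D /\ ~ {subset F <= G}.
Proof.
move=> GD' naG; have okG := cl_ok stl_complex GD'.
case/(iff okG): GD' => // [[A [B [C [AA [[BF nFB] [[CD [dC [H HD HFC]]] GE]]]]]]].
have nA x : x \in A -> False.
  by move=> xA; move: (AA x xA); rewrite inE => /eqP ex; move: naG; rewrite GE !mem_cat -ex xA.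
split.
  apply: (cl cD HD okG) => x; rewrite GE !mem_cat HFC mem_cat.
  by case/or3P => [/nA//|/BF ->//|->]; rewrite orbT.
move=> FG; apply: nFB => x xF; move: (FG x xF); rewrite GE !mem_cat.
case/or3P => [/nA//|//|xC]; by move: (dC x xF); rewrite xC.
Qed.

Lemma stl_keep G : G \in D -> ~ {subset F <= G} -> G \in D'.
Proof. move=> GD nFG; apply/(iff (cl_ok cD GD)); by left. Qed.

Lemma stl_new G : G \in D' -> a \in G ->
  exists2 H, H \in D & ({subset F <= H} /\ (forall x, x \in G -> x != a -> x \in H)
                        /\ ~ {subset F <= G}).
Proof.
move=> GD' aG; have okG := cl_ok stl_complex GD'.
case/(iff okG): GD' => [[GD _]|[A [B [C [AA [[BF nFB] [[CD [dC [H HD HFC]]] GE]]]]]]].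
  by case: (notv GD aG).
exists H => //; split; first by move=> x xF; rewrite HFC mem_cat xF.
split.
  move=> x; rewrite GE !mem_cat => /or3P[xA|/BF xF|xC] xa.
  - by move: (AA x xA); rewrite inE (negbTE xa).
  - by rewrite HFC mem_cat xF.
  - by rewrite HFC mem_cat xC orbT.
move=> FG; apply: nFB => x xF; move: (FG x xF); rewrite GE !mem_cat.
case/or3P => [/AA|//|xC].
  by rewrite inE => /eqP ex; case: (notv FD xF).
by move: (dC x xF); rewrite xC.
Qed.

Lemma stl_vx_old v : vx D' v -> v != a -> vx D v.
Proof.
move=> /hasP[G GD' vG] va.
have h : [:: v] \in D'.
  by apply: (cl stl_complex GD') => // x; rewrite inE => /eqP ->.
case: (stl_old h); first by rewrite inE eq_sym.
by move=> h1 _; apply/hasP; exists [:: v]; rewrite ?mem_head.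
Qed.

Lemma stl_vx v : (exists x y, [/\ x \in F, y \in F & x != y]) -> vx D v -> vx D' v.
Proof.
move=> [x [y [xF yF xy]]] /hasP[G GD vG].
have h : [:: v] \in D by apply: (cl cD GD) => // z; rewrite inE => /eqP ->.
apply/hasP; exists [:: v]; rewrite ?mem_head //.
apply: stl_keep => // FG; move: (FG x xF) (FG y yF); rewrite !inE => /eqP ex /eqP ey.
by rewrite ex ey eqxx in xy.
Qed.

Lemma stl_dim : dim1 D' = dim1 D.
Proof.
apply/eqP; rewrite eqn_leq; apply/andP; split.
  apply/bigmax_leqP_seq => G GD' _.
  case aG: (a \in G); last first.
    case: (stl_old GD'); first by rewrite aG.
    by move=> GD _; exact: dim_ge GD.
  case: (stl_new GD' aG) => H HD [FH [GH nFG]].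
  have [f fF fG] : exists2 f, f \in F & f \notin G.
    case: (boolP (all (fun f => f \in G) F)) => [/allP h|]; first by case: nFG.
    by rewrite -has_predC => /hasP[f fF fG]; exists f.
  apply: leq_trans (dim_ge HD).
  have okH := cl_ok cD HD.
  have : size G <= size (a :: rem f H).
    apply: uniq_leq_size; first exact: ok_uniq (cl_ok stl_complex GD').
    move=> x xG; rewrite inE; case: (eqVneq x a) => //= xa.
    rewrite (mem_rem_uniq _ (ok_uniq okH)) inE (GH x xG xa) andbT.
    by apply/eqP => ex; move: fG; rewrite -ex xG.
  have hp : 0 < size H by rewrite lt0n size_eq0; apply/eqP=> E; move: (FH f fF); rewrite E.
  by rewrite /= size_rem ?(FH f fF) // prednK.
apply/bigmax_leqP_seq => G GD _.
case: (boolP (all (fun f => f \in G) F)) => [/allP FG|]; last first.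
  move=> h; apply: (dim_ge (stl_keep GD _)) => FG.
  by move/allP: FG; rewrite (negbTE h).
case EF: F Fn => [//|f F0] _.
have fG : f \in G by apply: FG; rewrite EF mem_head.
have okG := cl_ok cD GD.
have aG : a \notin G by apply/negP => aG; case: (notv GD aG).
set G' := mkf (a :: rem f G).
have uG' : uniq (a :: rem f G).
  by rewrite /= rem_uniq ?ok_uniq // andbT; apply/negP => /mem_rem; apply/negP.
have G'D : G' \in D'.
  apply/(iff (mkf_ok _)); right.
  exists [:: a], [seq x <- F | x != f], [seq x <- G | x \notin F].
  split => //; split.
    split; first by move=> x; rewrite mem_filter => /andP[].
    by move=> h; move: (h f); rewrite EF mem_head mem_filter eqxx => /(_ isT).
  split.
    split; first exact: cl_filter.
    split; first by move=> x xF; rewrite mem_filter xF.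
    by exists G => // x; rewrite mem_cat mem_filter; case xF: (x \in F) => //=; apply: FG.
  move=> x; rewrite mem_mkf /= !inE !mem_cat !mem_filter (mem_rem_uniq _ (ok_uniq okG)) inE.
  case: (x == a) => //=; case xF: (x \in F) => /=.
    by rewrite (FG x xF) andbT orbF.
  by case: (eqVneq x f) => // ex; move: xF; rewrite ex EF mem_head.
apply: leq_trans (dim_ge G'D).
have hp : 0 < size G by rewrite lt0n size_eq0; apply/eqP=> E; move: fG; rewrite E.
by rewrite size_mkf // /= size_rem // prednK.
Qed.

End StlFacts.

Definition rainbow (k : nat -> nat) (G : seq nat) :=
  forall y z, y \in G -> z \in G -> y != z -> k y != k z.

Definition Ghyp (M : complex) a (k : nat -> nat) (Q : seq nat) D :=
  is_complex M /\ uniq Q /\ D < size Q /\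
  (forall G, G \in M -> a \in G -> forall y z, y \in G -> z \in G ->
       y != a -> z != a -> y != z -> k y != k z) /\
  (forall G, G \in M -> a \in G -> count (fun v => (v != a) && (k v \in Q)) G <= D).

Definition Gconcl (M0 : complex) a (k0 : nat -> nat) (Q : seq nat) (M : complex) k :=
  stellar_seq M0 M /\ is_complex M /\ dim1 M = dim1 M0 /\ (forall v, vx M0 v -> vx M v) /\
  (forall G, G \in M0 -> a \notin G -> G \in M) /\
  (forall G, G \in M -> (G \in M0 /\ a \notin G) \/
       (rainbow k G /\ forall v, v \in G -> [|| v == a, adj M0 a v | ~~ vx M0 v])) /\
  (forall v, vx M v -> (v == a) || ~~ vx M0 v -> k v \in Q) /\
  (forall v, vx M0 v -> v != a -> k v = k0 v).

Lemma count_le_sub (s t : seq nat) (P P' : pred nat) : uniq s ->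
  (forall x, x \in s -> P x -> (x \in t) && P' x) -> count P s <= count P' t.
Proof.
move=> us h; rewrite -!size_filter; apply: uniq_leq_size; first exact: filter_uniq.
move=> x; rewrite !mem_filter => /andP[Px xs]; by case/andP: (h x xs Px) => -> ->.
Qed.

Lemma count_le_in (T : eqType) (t : seq T) (P P' : pred T) :
  (forall x, x \in t -> P x -> P' x) -> count P t <= count P' t.
Proof.
elim: t => [//|y t IH] h /=; have h' : forall x, x \in t -> P x -> P' x.
  by move=> x xt; apply: h; rewrite inE xt orbT.
case Py: (P y); first by rewrite (h y (mem_head _ _) Py) /= leq_add2l IH.
by rewrite add0n; apply: leq_trans (IH h') (leq_addl _ _).
Qed.

Lemma count_lt (T : eqType) (t : seq T) (P P' : pred T) w :
  (forall x, x \in t -> P x -> P' x) -> w \in t -> P' w -> ~~ P w -> count P t < count P' t.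
Proof.
elim: t => [//|y t IH] h; rewrite inE => /orP[/eqP ->|wt] P'w nPw /=.
  rewrite P'w (negbTE nPw) add0n add1n ltnS.
  apply: count_le_in => x xt; apply: h; by rewrite inE xt orbT.
have h' : forall x, x \in t -> P x -> P' x by move=> x xt; apply: h; rewrite inE xt orbT.
have := IH h' wt P'w nPw; case Py: (P y).
  by rewrite (h y (mem_head _ _) Py).
by case: (P' y) => //= q; apply: leq_trans q _.
Qed.

Lemma vx_of (M : complex) G v : G \in M -> v \in G -> vx M v.
Proof. by move=> GM vG; apply/hasP; exists G. Qed.

Lemma adj_of (M : complex) G u v : G \in M -> u \in G -> v \in G -> adj M u v.
Proof. by move=> GM uG vG; apply/hasP; exists G => //; rewrite uG vG. Qed.

Lemma fresh_nv (M : complex) v : vx M v -> v != fresh M.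
Proof. by move=> /vxP h; apply/eqP => e; apply: (fresh_ok (D := M)); rewrite -e. Qed.

Section Loop.
Variable D : nat.
Hypothesis IH : 0 < D -> forall M a k Q, Ghyp M a k Q D.-1 -> exists M' k', Gconcl M a k Q M' k'.
Variables (M0 : complex) (a : nat) (k0 : nat -> nat) (Q : seq nat).
Hypothesis hyp : Ghyp M0 a k0 Q D.

Let x := head 0 Q.
Let Q' := behead Q.
Let V0 := flatten M0.
Definition bad (M : complex) v := (v != a) && adj M a v && (k0 v == x).

Definition Inv (M : complex) (k : nat -> nat) :=
  stellar_seq M0 M /\ is_complex M /\ dim1 M = dim1 M0 /\ (forall v, vx M0 v -> vx M v) /\
  (forall G, G \in M0 -> a \notin G -> G \in M) /\
  (forall G, G \in M -> G \in M0 \/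
       (rainbow k G /\ forall v, v \in G -> [|| v == a, adj M0 a v | ~~ vx M0 v])) /\
  k a = x /\ (forall v, vx M v -> ~~ vx M0 v -> k v \in Q') /\
  (forall v, vx M0 v -> v != a -> k v = k0 v).

Let cM0 : is_complex M0. Proof. by case: hyp. Qed.
Let uQ : uniq Q. Proof. by case: hyp => _ []. Qed.
Let DQ : D < size Q. Proof. by case: hyp => _ [_ []]. Qed.
Let rb0 := (let: conj _ (conj _ (conj _ (conj h _))) := hyp in h).
Let cnt0 := (let: conj _ (conj _ (conj _ (conj _ h))) := hyp in h).

Let EQ : Q = x :: Q'.
Proof. by rewrite /x /Q'; case: (Q) DQ. Qed.
Let xQ' : x \notin Q'.
Proof. by move: uQ; rewrite EQ /= => /andP[]. Qed.
Let xQ : x \in Q. Proof. by rewrite EQ mem_head. Qed.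

Lemma V0P v : reflect (vx M0 v) (v \in V0).
Proof. apply: (iffP flattenP) => [[G GM vG]|/hasP[G GM vG]]; [exact: vx_of GM vG| by exists G]. Qed.

Lemma loop_end M k : Inv M k -> count (bad M) V0 = 0 -> Gconcl M0 a k0 Q M k.
Proof.
move=> [s [c [d [vv [kp [fc [ka [kn ko]]]]]]]] c0.
have nb v : v \in V0 -> bad M v = false.
  move=> vV; apply/negP => bv.
  have := @count_lt _ V0 pred0 (bad M) v (fun y _ (f : pred0 y) => ltac:(by [])) vV bv isT.
  by rewrite c0 count_pred0.
have rbG G : G \in M0 -> G \in M -> a \in G -> rainbow k G.
  move=> G0 GM aG y z yG zG yz.
  have Hk u : u \in G -> u != a -> k u = k0 u by move=> uG ua; apply: ko => //; exact: vx_of uG.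
  have Hx u : u \in G -> u != a -> k u != x.
    move=> uG ua; rewrite Hk //; apply/negP => e.
    have uV : u \in V0 by apply/V0P; exact: vx_of uG.
    by move: (nb u uV); rewrite /bad ua e (adj_of GM aG uG).
  case: (eqVneq y a) => [ya|ya].
    by rewrite ya ka eq_sym Hx // -ya eq_sym.
  case: (eqVneq z a) => [za|za].
    by rewrite za ka Hx.
  by rewrite !Hk //; apply: (rb0 G0 aG).
split => //; split => //; split => //; split => //; split => //; split.
  move=> G GM; case: (fc G GM) => [G0|]; last by right.
  case aG: (a \in G); last by left; split => //; apply/negbT.
  right; split; first exact: rbG.
  by move=> v vG; case: (eqVneq v a) => //= _; rewrite (adj_of G0 aG vG).
split => //.
move=> v vM /orP[/eqP ->|nv]; first by rewrite ka.
by apply: mem_behead; apply: kn.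
Qed.

Lemma loop_step M k : Inv M k -> 0 < count (bad M) V0 ->
  exists M2 k2, Inv M2 k2 /\ count (bad M2) V0 < count (bad M) V0.
Proof.
move=> inv; have [s [c [d [vv [kp [fc [ka [kn ko]]]]]]]] := inv.
rewrite -has_count => /hasP[w wV] /andP[/andP[wa /hasP[H0 H0M /andP[aH0 wH0]]] /eqP k0w].
have w0 : vx M0 w by apply/V0P.
have kw : k w = x by rewrite ko.
have KH H : H \in M -> a \in H -> w \in H -> H \in M0.
  move=> HM aH wH; case: (fc H HM) => // [[rb _]].
  by move: (rb a w aH wH); rewrite eq_sym wa ka kw eqxx => /(_ isT).
set F := mkf [:: a; w].
have FM : F \in M by apply: (cl_mkf c H0M) => y; rewrite !inE => /orP[]/eqP->.
have aF : a \in F by rewrite mem_mkf mem_head.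
have wF : w \in F by rewrite mem_mkf !inE eqxx orbT.
have Fn : F <> [::] by move=> e; move: aF; rewrite e.
set b := fresh M.
have st := stel_ok c FM Fn (fresh_ok (D := M)).
set M1 := stel M F b in st.
have cM1 := stl_complex st.
have bv : ~~ vx M b by apply/negP => /vxP; apply: fresh_ok.
have bv0 : ~~ vx M0 b by apply/negP => /vv; exact/negP.
have H00 := KH H0 H0M aH0 wH0.
have Dpos : 0 < D.
  apply: leq_trans (cnt0 H00 aH0); rewrite -has_count; apply/hasP; exists w => //.
  by rewrite wa k0w xQ.
have NB G' : G' \in M1 -> b \in G' -> exists2 H, H \in M0 &
     [/\ a \in H, w \in H, (forall y, y \in G' -> y != b -> y \in H) & ~~ ((a \in G') && (w \in G'))].
  move=> G'M bG'; case: (stl_new st G'M bG') => H HM [FH [GH nFG]].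
  exists H; first by apply: KH => //; [apply: FH | apply: FH].
  split => //; [exact: FH| exact: FH|].
  apply/negP => /andP[aG wG]; apply: nFG => y.
  by rewrite mem_mkf !inE => /orP[]/eqP->.
have hyp1 : Ghyp M1 b k Q' D.-1.
  split => //; split; first by move: uQ; rewrite EQ => /andP[].
  split; first by move: DQ; rewrite EQ /= -(ltn_add2r 1) !addn1 prednK.
  split.
    move=> G' G'M bG' y z yG zG yb zb yz.
    case: (NB G' G'M bG') => H HM [aH wH GH naw].
    have yH := GH y yG yb; have zH := GH z zG zb.
    have Hk u : u \in H -> u != a -> k u = k0 u by move=> uH ua; apply: ko => //; exact: vx_of uH.
    have Hx u : u \in G' -> u != b -> u != a -> u != w -> k u != x.
      move=> uG ub ua uw; rewrite Hk ?(GH u uG ub) // -k0w.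
      by apply: (rb0 HM aH) => //; apply: GH.
    case: (eqVneq y a) => [ya|ya].
      rewrite ya ka eq_sym Hx //; first by rewrite -ya eq_sym.
      by apply/eqP => zw; move: naw; rewrite -ya yG -zw zG.
    case: (eqVneq z a) => [za|za].
      rewrite za ka Hx //.
      by apply/eqP => yw; move: naw; rewrite -za zG -yw yG.
    by rewrite !Hk //; apply: (rb0 HM aH).
  move=> G' G'M bG'.
  case: (NB G' G'M bG') => H HM [aH wH GH naw].
  rewrite -ltnS prednK //; apply: leq_trans (cnt0 HM aH).
  apply: (@leq_ltn_trans (count (fun v => [&& v != a, v != w & k0 v \in Q']) H)).
    apply: count_le_sub; first exact: ok_uniq (cl_ok cM1 G'M).
    move=> y yG /andP[yb ykQ]; have yH := GH y yG yb; rewrite yH /=.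
    have ya : y != a by apply/eqP => e; move: ykQ; rewrite e ka (negbTE xQ').
    have yw : y != w by apply/eqP => e; move: ykQ; rewrite e kw (negbTE xQ').
    by rewrite ya yw /= -(ko y (vx_of HM yH) ya).
  apply: (count_lt (w := w)) => //.
    by move=> y yH /and3P[-> _ h]; exact: mem_behead h.
  by rewrite wa k0w xQ.
  by rewrite eqxx andbF.
case: (IH Dpos hyp1) => M2 [k2 [s2 [c2 [d2 [vv2 [kp2 [fc2 [kn2 ko2]]]]]]]].
have vM1 v : vx M v -> vx M1 v.
  by apply: (stl_vx c st); exists a, w; split => //; apply/eqP => e; move: wa; rewrite e eqxx.
have aM : vx M a by exact: vx_of FM aF.
have ab : a != b by exact: fresh_nv.
have k2a : k2 a = x by rewrite ko2 ?vM1.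
have fc2' G : G \in M2 -> (G \in M /\ ~ {subset F <= G}) \/ rainbow k2 G.
  move=> GM2; case: (fc2 G GM2) => [[GM1 bG]|[rb _]]; last by right.
  by left; apply: (stl_old c st).
have badd v : v \in V0 -> bad M2 v -> bad M v && (v != w).
  move=> vV /andP[/andP[va /hasP[G GM2 /andP[aG vG]]] /eqP kv].
  have v0 : vx M0 v by apply/V0P.
  case: (fc2' G GM2) => [[GM nFG]|rb].
    rewrite /bad va kv eqxx (adj_of GM aG vG) /=.
    apply/eqP => e; apply: nFG => y; rewrite mem_mkf !inE => /orP[]/eqP->//.
    by rewrite -e.
  have := rb a v aG vG; rewrite eq_sym va k2a ko2 ?vM1 ?(vv _ v0) //.
    by rewrite ko // kv eqxx => /(_ isT).
  by apply/eqP => e; move: bv0; rewrite -e v0.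
exists M2, k2; split; last first.
  apply: (count_lt (w := w)) => //.
    by move=> v vV /(badd v vV)/andP[].
  by rewrite /bad wa k0w eqxx (adj_of H0M aH0 wH0).
  by apply/negP => /(badd w wV); rewrite eqxx andbF.
split; first exact: ss_trans s (ss_step st s2).
split => //; split; first by rewrite d2 (stl_dim c st) d.
split; first by move=> v /vv /vM1 /vv2.
split.
  move=> G G0 aG; apply: kp2; first apply: (stl_keep c st (kp G G0 aG)).
    by move=> FG; move: (FG a aF); rewrite (negbTE aG).
  apply/negP => bG; move: bv; rewrite (vx_of (kp G G0 aG) bG).
  done.
split.
  move=> G GM2; case: (fc2 G GM2) => [[GM1 bG]|[rb vp]].
    case: (stl_old c st GM1 bG) => GM _; case: (fc G GM) => [|[rb vp]]; [by left|right].
    split => //.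
    move=> y z yG zG yz; have vy : vx M1 y by exact: vx_of GM1 yG.
    have vz : vx M1 z by exact: vx_of GM1 zG.
    rewrite !ko2 //; [exact: rb| |]; apply/eqP => e; move: bG; by rewrite -e ?yG ?zG.
  right; split => // v vG; case/or3P: (vp v vG) => [/eqP->|/hasP[G'' G''M /andP[bG'' vG'']]|nv].
  - by rewrite bv0 !orbT.
  - case: (eqVneq v b) => [->|vb]; first by rewrite bv0 !orbT.
    case: (NB G'' G''M bG'') => H HM [aH wH GH naw].
    by rewrite (adj_of HM aH (GH v vG'' vb)) orbT.
  - by apply/or3P; apply: Or33; apply/negP => /vv/vM1; exact/negP.
split; first by [].
split.
  move=> v vM2 nv0; case: (boolP ((v == b) || ~~ vx M1 v)) => [h|]; first exact: kn2.
  rewrite negb_or negbK => /andP[vb vM1v].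
  rewrite ko2 //; apply: kn => //; apply: (stl_vx_old c st) => //.
move=> v v0 va; rewrite ko2 ?ko //; first by apply: vM1; apply: vv.
by apply/eqP => e; move: bv0; rewrite -e v0.
Qed.

Lemma loop_all n M k : Inv M k -> count (bad M) V0 <= n -> exists M' k', Gconcl M0 a k0 Q M' k'.
Proof.
elim: n M k => [|n IHn] M k inv.
  by rewrite leqn0 => /eqP c0; exists M, k; exact: loop_end.
case: (posnP (count (bad M) V0)) => [c0 _|cp cn]; first by exists M, k; exact: loop_end.
case: (loop_step inv cp) => M2 [k2 [inv2 lt2]].
by apply: (IHn M2 k2 inv2); rewrite -ltnS; apply: leq_trans lt2 _.
Qed.

Lemma loop_main : exists M' k', Gconcl M0 a k0 Q M' k'.
Proof.
pose k := fun v => if v == a then x else k0 v.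
apply: (@loop_all (count (bad M0) V0) M0 k) => //.
split; first exact: ss_refl.
split => //; split => //; split => //; split => //; split; first by move=> G GM; left.
split; first by rewrite /k eqxx.
split; first by move=> v ->.
by move=> v _ va; rewrite /k (negbTE va).
Qed.

End Loop.

Lemma Gmain D : forall M a k Q, Ghyp M a k Q D -> exists M' k', Gconcl M a k Q M' k'.
Proof.
elim: D => [|D IHD] M a k Q h.
  by apply: (loop_main (D := 0)).
by apply: (loop_main (D := D.+1)) => // _.
Qed.

Section Main.
Variables (K L : complex) (c : nat -> nat).
Hypotheses (cK : is_complex K) (cL : is_complex L) (KL : subcomplex K L)
  (pc : proper_coloring K (dim1 K) c).

Let n := dim1 L.
Let mn : dim1 K <= n.
Proof. apply/bigmax_leqP_seq => G GK _; exact: dim_ge (KL GK). Qed.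
Let cKv v : vx K v -> c v < n.
Proof. move=> /vxP h; apply: leq_trans mn; exact: pc.1 v h. Qed.

Let k0 v := if vx K v then c v else n + v.

Let confK y z : y != z -> k0 y = k0 z -> vx K y && vx K z.
Proof.
rewrite /k0 => yz; case Ky: (vx K y); case Kz: (vx K z) => // e.
- by move: (cKv Ky); rewrite e; lia.
- by move: (cKv Kz); rewrite -e; lia.
- by move/eqP: yz; lia.
Qed.

Let PK := [seq (u, v) | u <- flatten K, v <- flatten K].
Definition conf (M : complex) (p : nat * nat) :=
  (p.1 < p.2) && adj M p.1 p.2 && (k0 p.1 == k0 p.2).

Lemma vxK v : vx K v -> v \in flatten K.
Proof. by move=> /hasP[G GK vG]; apply/flattenP; exists G. Qed.

Lemma mkf2 u v : u != v -> size (mkf [:: u; v]) = 2.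
Proof. by move=> uv; rewrite size_mkf //= inE uv. Qed.

Lemma stage1 N M : is_complex M -> dim1 M = n -> subcomplex K M -> count (conf M) PK <= N ->
  exists M1, stellar_seq M M1 /\ is_complex M1 /\ dim1 M1 = n /\ subcomplex K M1 /\
             (forall G, G \in M1 -> rainbow k0 G).
Proof.
elim: N M => [|N IHN] M cM dM KM.
  rewrite leqn0 => /eqP c0; exists M; split; first exact: ss_refl.
  split => //; split => //; split => // G GM y z yG zG yz; apply/eqP => e.
  case/andP: (confK yz e) => Ky Kz.
  have hc p : p \in PK -> conf M p -> False.
    move=> pP cp; have := @count_lt _ PK pred0 (conf M) p (fun y _ (f : pred0 y) => ltac:(by [])) pP cp isT.
    by rewrite c0 count_pred0.
  case: (ltngtP y z) => [lt|lt|eq]; last by rewrite eq eqxx in yz.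
  - apply: (hc (y, z)); first by apply/allpairsP; exists (y, z); rewrite !vxK.
    by rewrite /conf /= lt (adj_of GM yG zG) e eqxx.
  - apply: (hc (z, y)); first by apply/allpairsP; exists (z, y); rewrite !vxK.
    by rewrite /conf /= lt (adj_of GM zG yG) e eqxx.
move=> cnt; case: (posnP (count (conf M) PK)) => [c0|cp].
  by apply: (IHN M) => //; rewrite c0.
move: (cp); rewrite -has_count => /hasP[[u v] pP /andP[/andP[/= uv /hasP[H HM /andP[uH vH]]] /eqP ke]].
have uv' : u != v by rewrite neq_ltn uv.
set F := mkf [:: u; v].
have FM : F \in M by apply: (cl_mkf cM HM) => y; rewrite !inE => /orP[]/eqP->.
have uF : u \in F by rewrite mem_mkf mem_head.
have vF : v \in F by rewrite mem_mkf !inE eqxx orbT.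
have Fn : F <> [::] by move=> e; move: uF; rewrite e.
have st := stel_ok cM FM Fn (fresh_ok (D := M)).
set M' := stel M F (fresh M) in st.
have KM' : subcomplex K M'.
  move=> G GK; apply: (stl_keep cM st (KM _ GK)) => FG.
  have KE : F \in K by apply: (cl_mkf cK GK) => y; rewrite !inE => /orP[]/eqP-> ; apply: FG.
  have Ku : vx K u by exact: vx_of GK (FG u uF).
  have Kv : vx K v by exact: vx_of GK (FG v vF).
  move: ke; rewrite /k0 Ku Kv => e.
  by move: (pc.2 F KE (mkf2 uv') u v uF vF uv'); rewrite e eqxx.
have dec p : p \in PK -> conf M' p -> conf M p && (p != (u, v)).
  case: p => u' v' /allpairsP[[u0 v0] [/= u0K v0K [-> ->]]].
  move=> /andP[/andP[/= lt /hasP[G GM' /andP[uG vG]]] ke'].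
  have Ku : vx K u0 by apply/hasP; move/flattenP: u0K => [G0 ? ?]; exists G0.
  have Kv : vx K v0 by apply/hasP; move/flattenP: v0K => [G0 ? ?]; exists G0.
  have E'M : mkf [:: u0; v0] \in M' by apply: (cl_mkf (stl_complex st) GM') => y; rewrite !inE => /orP[]/eqP->.
  have aE : fresh M \notin mkf [:: u0; v0].
    rewrite mem_mkf !inE negb_or; apply/andP; split; rewrite eq_sym; apply: fresh_nv.
      by move/hasP: Ku => [G0 G0K ?]; apply/hasP; exists G0 => //; apply: KM.
    by move/hasP: Kv => [G0 G0K ?]; apply/hasP; exists G0 => //; apply: KM.
  case: (stl_old cM st E'M aE) => EM nFE.
  rewrite /conf /= lt ke' (adj_of EM (_ : u0 \in _) (_ : v0 \in _)) ?mem_mkf ?inE ?eqxx ?orbT //=.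
  apply/negP => /eqP [e1 e2]; apply: nFE => y; rewrite !mem_mkf !inE e1 e2.
  by [].
have [M1 [s1 rest]] : exists M1, stellar_seq M' M1 /\ is_complex M1 /\ dim1 M1 = n /\ subcomplex K M1 /\
             (forall G, G \in M1 -> rainbow k0 G).
  apply: (IHN M') => //.
  - exact: stl_complex st.
  - by rewrite (stl_dim cM st).
  rewrite -ltnS; apply: leq_trans cnt; apply: (count_lt (w := (u, v))) => //.
  - by move=> p0 p0P /(dec p0 p0P)/andP[].
  - by rewrite /conf /= uv (adj_of HM uH vH) ke eqxx.
  - by apply/negP => /(dec _ pP); rewrite eqxx andbF.
by exists M1; split => //; exact: ss_step st s1.
Qed.

Definition high (M : complex) (k : nat -> nat) v := vx M v && (n <= k v).

Lemma stage2 (U : seq nat) N M k : is_complex M -> dim1 M = n -> subcomplex K M ->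
  (forall G, G \in M -> rainbow k G) -> (forall v, vx K v -> k v = c v) ->
  (forall v, vx M v -> n <= k v -> v \in U) -> count (high M k) U <= N ->
  exists M' k', stellar_seq M M' /\ is_complex M' /\ dim1 M' = n /\ subcomplex K M' /\
     (forall G, G \in M' -> rainbow k' G) /\ (forall v, vx K v -> k' v = c v) /\
     (forall v, vx M' v -> k' v < n).
Proof.
elim: N M k => [|N IHN] M k cM dM KM rbM kK hU.
  rewrite leqn0 => /eqP c0; exists M, k; split; first exact: ss_refl.
  do 5 (split => //).
  move=> v vM; rewrite ltnNge; apply/negP => nk.
  have := @count_lt _ U pred0 (high M k) v (fun y _ (f : pred0 y) => ltac:(by [])) (hU v vM nk).
  by rewrite /high vM nk c0 count_pred0 => /(_ isT isT).
move=> cnt; case: (posnP (count (high M k) U)) => [c0|cp].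
  by apply: (IHN M k) => //; rewrite c0.
move: (cp); rewrite -has_count => /hasP[a aU /andP[aM na]].
have nKa : ~~ vx K a by apply/negP => /[dup] /kK e /cKv; rewrite -e; lia.
have npos : 0 < n.
  move/hasP: aM => [G GM aG]; rewrite -dM; apply: leq_trans (dim_ge GM).
  by case: (G) aG.
have hyp : Ghyp M a k (iota 0 n) n.-1.
  split => //; split; first exact: iota_uniq.
  split; first by rewrite size_iota; lia.
  split; first by move=> G GM _ y z yG zG _ _; exact: (rbM G GM y z yG zG).
  move=> G GM aG.
  have h1 := count_predC (pred1 a) G.
  have h2 : 0 < count (pred1 a) G.
    by rewrite -has_count; apply/hasP; exists a => //=.
  have h3 := dim_ge GM.
  have h4 : count (fun v => (v != a) && (k v \in iota 0 n)) G <= count (predC (pred1 a)) G.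
    by apply: sub_count => y /andP[].
  rewrite dM in h3; lia.
case: (Gmain hyp) => M2 [k2 [s2 [c2 [d2 [vv2 [kp2 [fc2 [kn2 ko2]]]]]]]].
have hi v : v \in U -> high M2 k2 v -> high M k v && (v != a).
  move=> vU /andP[v2 nk2].
  case: (boolP ((v == a) || ~~ vx M v)) => [h|].
    by move: (kn2 v v2 h); rewrite mem_iota; lia.
  rewrite negb_or negbK => /andP[va vM]; by rewrite /high vM va -(ko2 v vM va) nk2.
have [M3 [k3 [s3 rest]]] : exists M' k', stellar_seq M2 M' /\ is_complex M' /\ dim1 M' = n /\
     subcomplex K M' /\ (forall G, G \in M' -> rainbow k' G) /\ (forall v, vx K v -> k' v = c v) /\
     (forall v, vx M' v -> k' v < n).
  apply: (IHN M2 k2) => //.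
  - by rewrite d2.
  - move=> G GK; apply: kp2; first exact: KM.
    by apply/negP => aG; move: nKa; rewrite (vx_of GK aG).
  - move=> G GM2; case: (fc2 G GM2) => [[GM aG]|[rb _]] //.
    move=> y z yG zG yz; rewrite !ko2; first exact: (rbM G GM y z yG zG yz).
    + exact: vx_of GM zG.
    + by apply/eqP => e; move: aG; rewrite -e zG.
    + exact: vx_of GM yG.
    + by apply/eqP => e; move: aG; rewrite -e yG.
  - move=> v vK; have vM : vx M v by move/hasP: vK => [G GK vG]; apply: vx_of (KM _ GK) vG.
    rewrite ko2 ?kK //; by apply/eqP => e; move: nKa; rewrite -e vK.
  - move=> v v2 nk; case: (boolP ((v == a) || ~~ vx M v)) => [h|].
      by move: (kn2 v v2 h); rewrite mem_iota; lia.
    rewrite negb_or negbK => /andP[va vM]; apply: hU => //; by rewrite -(ko2 v vM va).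
  - rewrite -ltnS; apply: leq_trans cnt; apply: (count_lt (w := a)) => //.
    + by move=> v vU /(hi v vU)/andP[].
    + by rewrite /high aM na.
    + by apply/negP => /(hi a aU); rewrite eqxx andbF.
by exists M3, k3; split => //; exact: ss_trans s2 s3.
Qed.

Lemma main_sec : exists L' : complex,
    stellar_seq L L' /\
    subcomplex K L' /\
    balanced L' /\
    exists c' : nat -> nat,
      proper_coloring L' (dim1 L') c' /\
      (forall v, is_vertex K v -> c' v = c v).
Proof.
have [M1 [s1 [c1 [d1 [K1 rb1]]]]] := @stage1 (count (conf L) PK) L cL erefl KL (leqnn _).
have kK v : vx K v -> k0 v = c v by rewrite /k0 => ->.
have hU v : vx M1 v -> n <= k0 v -> v \in flatten M1.
  by move=> /hasP[G GM vG] _; apply/flattenP; exists G.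
have [M2 [k2 [s2 [c2 [d2 [K2 [rb2 [kK2 lt2]]]]]]]] :=
  @stage2 (flatten M1) (count (high M1 k0) (flatten M1)) M1 k0 c1 d1 K1 rb1 kK hU (leqnn _).
have pc2 : proper_coloring M2 (dim1 M2) k2.
  split; first by move=> v /vxP h; rewrite d2; exact: lt2.
  by move=> G GM _ u v uG vG uv; exact: (rb2 G GM u v uG vG uv).
exists M2; split; first exact: ss_trans s1 s2.
split => //; split; first by exists k2.
by exists k2; split => // v /vxP h; exact: kK2.
Qed.

End Main.

Theorem corollary3p2 (K L : complex) (c : nat -> nat) :
  is_complex K -> is_complex L -> subcomplex K L ->
  proper_coloring K (dim1 K) c ->
  exists L' : complex,
    stellar_seq L L' /\
    subcomplex K L' /\
    balanced L' /\
    exists c' : nat -> nat,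
      proper_coloring L' (dim1 L') c' /\
      (forall v, is_vertex K v -> c' v = c v).
Proof. move=> cK cL KL pc; exact: main_sec. Qed.
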